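(* Let $q$ be a prime power and $f\in\mathbb{F}_q[x]$ monic of degree $m$, and put $M(x)=x^mf(x+x^{-1})$. Suppose $M(x)=(x-1)^2g_1(x)\cdots g_{r-1}(x)$ where the $g_i$ are pairwise different monic irreducible polynomials, none equal to $x\pm1$. Let $M_t(x)=M(x)+tx^m\in\mathbb{F}_q(t)[x]$ with Galois group $H$ over $\mathbb{F}_q(t)$, let its roots be arranged in pairs $\{\alpha_i,\alpha_i^{-1}\}$, $1\le i\le m$, and let $N$ be the kernel of the action of $H$ on these pairs. Then $H/N$ (and hence any subgroup $H_0\le H$ with $H_0\cong H/N$, $H_0\cap N=1$) is isomorphic to the Galois group of $f(x)+t$ over $\mathbb{F}_q(t)$. *)

(* Defs.v *)
From HB Require Import structures.
From mathcomp Require Import all_boot all_order all_algebra all_fingroup all_field.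
Set Implicit Arguments. Unset Strict Implicit. Unset Printing Implicit Defensive.
Import GRing.Theory.
Local Open Scope ring_scope.

Notation ratfun F := {fraction {poly F}}.

Definition cst (F : fieldType) (c : F) : ratfun F := @FracField.tofrac {poly F} c%:P.

Definition tvar (F : fieldType) : ratfun F := @FracField.tofrac {poly F} 'X.

(* M(x) = x^m f(x + x^{-1}), m = deg f, written out as a polynomial:
   x^m f(x + 1/x) = sum_i f_i x^(m-i) (x^2+1)^i. *)
Definition Mpoly (F : fieldType) (f : {poly F}) : {poly F} :=
  \sum_(i < size f) f`_i *: ('X^((size f).-1 - i) * ('X^2 + 1) ^+ i).

Definition Mtpoly (F : fieldType) (f : {poly F}) : {poly ratfun F} :=
  map_poly (@cst F) (Mpoly f) + tvar F *: 'X^((size f).-1).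

Definition fplust (F : fieldType) (f : {poly F}) : {poly ratfun F} :=
  map_poly (@cst F) f + (tvar F)%:P.

(* Kernel of the action of H = Gal(L / F(t)) on the pairs {a, a^-1} of roots,
   rs being the list of roots of M_t in its splitting field L. *)
Definition pair_kernel (K : fieldType) (L : splittingFieldType K) (rs : seq L)
  : {set gal_of {:L}} :=
  [set s in ('Gal({:L} / 1%AS))%g | all (fun a => (s a == a) || (s a == a^-1)) rs].

(* Main.v *)
Require Import Defs.
From HB Require Import structures.
From mathcomp Require Import all_boot all_order all_algebra all_fingroup all_field.
From mathcomp Require Import zify ring.
Import GRing.Theory.
Local Open Scope ring_scope.


Section PolyS.
Variable R : fieldType.
Definition Sp (n : nat) (h : {poly R}) : {poly R} :=
  \sum_(i < n.+1) h`_i *: ('X^(n - i) * ('X^2 + 1) ^+ i).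

Lemma SpD n (p q : {poly R}) : Sp n (p + q) = Sp n p + Sp n q.
Proof. by rewrite /Sp -big_split /=; apply: eq_bigr => i _; rewrite coefD scalerDl. Qed.
Lemma SpZ n (a : R) (p : {poly R}) : Sp n (a *: p) = a *: Sp n p.
Proof. by rewrite /Sp scaler_sumr; apply: eq_bigr => i _; rewrite coefZ scalerA. Qed.
Lemma SpN n (p : {poly R}) : Sp n (- p) = - Sp n p.
Proof. by rewrite -scaleN1r SpZ scaleN1r. Qed.
Lemma SpC n (c : R) : Sp n c%:P = c *: 'X^n.
Proof.
rewrite /Sp big_ord_recl /= big1 ?addr0 => [|i _].
  by rewrite coefC /= subn0 expr0 mulr1.
by rewrite coefC /= scale0r.
Qed.

Lemma Sp_horner n (h : {poly R}) (x : R) : (size h <= n.+1)%N -> x != 0 ->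
  (Sp n h).[x] = x ^+ n * h.[x + x^-1].
Proof.
move=> sh x0; rewrite (horner_coef_wide _ sh) horner_sum mulr_sumr.
apply: eq_bigr => [[i /=]]; rewrite ltnS => lein _.
rewrite hornerZ hornerM hornerXn horner_exp hornerD hornerXn hornerC.
have -> : x ^+ 2 + 1 = x * (x + x^-1) by rewrite mulrDr mulfV // expr2.
by rewrite exprMn [x ^+ (n - i) * _]mulrA -exprD subnK // mulrCA.
Qed.

Lemma Sp_horner0 n (h : {poly R}) : (Sp n h).[0] = h`_n.
Proof.
rewrite horner_sum big_ord_recr /= big1 ?add0r => [|i _].
  by rewrite subnn hornerZ hornerM hornerXn expr0 mul1r horner_exp hornerD
    hornerXn hornerC expr0n /= add0r expr1n mulr1.
rewrite hornerZ hornerM hornerXn expr0n /=.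
by rewrite subn_eq0 leqNgt ltn_ord /= mul0r mulr0.
Qed.

Lemma SpMX n (h : {poly R}) : Sp n.+1 (h * 'X) = ('X^2 + 1) * Sp n h.
Proof.
rewrite /Sp big_ord_recl /= coefMX /= scale0r add0r mulr_sumr.
apply: eq_bigr => i _; rewrite coefMX /= /bump /= add1n subSS exprS.
by rewrite add0n -!scalerAr mulrCA.
Qed.

Lemma SpS n (h : {poly R}) : (size h <= n.+1)%N -> Sp n.+1 h = 'X * Sp n h.
Proof.
move=> sh; rewrite /Sp big_ord_recr /= nth_default // scale0r addr0 mulr_sumr.
apply: eq_bigr => i _ /=; rewrite subSn; last by rewrite -ltnS.
by rewrite exprS -mulrA scalerAr.
Qed.

Lemma SpM n (h : {poly R}) (b : R) : (size h <= n.+1)%N ->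
  Sp n.+1 (h * ('X - b%:P)) = Sp n h * ('X^2 + 1 - b *: 'X).
Proof.
move=> sh; rewrite mulrBr SpD SpN (mulrC h b%:P) mul_polyC SpZ SpMX SpS //.
rewrite mulrBr [Sp n h * _]mulrC; congr (_ - _).
by rewrite -scalerAr mulrC.
Qed.

Lemma Y_monic n : (('X^2 + 1 : {poly R}) ^+ n) \is monic.
Proof. by apply: monic_exp; rewrite -polyC1 monicXnaddC. Qed.

Lemma size_Yn n : size (('X^2 + 1 : {poly R}) ^+ n) = (n.*2).+1.
Proof.
have := size_exp ('X^2 + 1 : {poly R}) n; rewrite -polyC1 size_XnaddC //=.
have : size (('X^2 + 1%:P : {poly R}) ^+ n) != 0%N.
  by rewrite size_poly_eq0 monic_neq0 // polyC1 Y_monic.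
by case: (size _) => // k _ /= ->; rewrite mul2n.
Qed.

Lemma coef_Yn n : (('X^2 + 1 : {poly R}) ^+ n)`_(n.*2) = 1.
Proof. by have := Y_monic n; rewrite monicE lead_coefE size_Yn /= => /eqP. Qed.

Lemma Sp_coef n (h : {poly R}) : (Sp n h)`_(n.*2) = h`_n.
Proof.
rewrite /Sp coef_sum big_ord_recr /= big1 ?add0r => [|i _].
  by rewrite subnn expr0 mul1r coefZ coef_Yn mulr1.
rewrite coefZ coefXnM.
have -> : (n.*2 < n - i)%N = false by lia.
have -> : (('X^2 + 1 : {poly R}) ^+ i)`_(n.*2 - (n - i)) = 0.
  by rewrite nth_default // size_Yn; have := ltn_ord i; lia.
by rewrite mulr0.
Qed.


Lemma split_Sp (rs : seq R) n (h : {poly R}) : size h = n.+1 ->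
  Sp n h %| \prod_(z <- rs) ('X - z%:P) ->
  exists2 ys : seq R, h %= \prod_(y <- ys) ('X - y%:P) &
    forall y, y \in ys -> exists2 z, z \in rs & y = z + z^-1.
Proof.
elim: n h => [|n IH] h sh dv.
  by exists [::]; rewrite // big_nil -size_poly_eq1 sh.
have hn0 : h`_n.+1 != 0.
  by rewrite -[n.+1]/((n.+2).-1) -sh -lead_coefE lead_coef_eq0 -size_poly_eq0 sh.
have [m Dm] := dvdp_prod_XsubC dv.
have szS : ((n.+1).*2 < size (Sp n.+1 h))%N.
  rewrite ltnNge; apply/negP => /(nth_default 0); rewrite Sp_coef.
  by apply/eqP.
move: (eqp_size Dm); rewrite size_prod_XsubC => eSz.
case Em: (mask m rs) Dm eSz => [|z ms] Dm eSz.
  by rewrite eSz in szS.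
have zrs : z \in rs.
  have : z \in mask m rs by rewrite Em mem_head.
  by move/mem_mask.
have rz : root (Sp n.+1 h) z by rewrite (eqp_root Dm) root_prod_XsubC mem_head.
have z0 : z != 0.
  by apply: contraTneq rz => ->; rewrite /root Sp_horner0.
have := rz; rewrite /root Sp_horner ?sh // mulf_eq0 expf_eq0 (negbTE z0) andbF /= => rb.
have [h' Dh] := factor_theorem _ _ rb.
have h'0 : h' != 0 by apply: contra_eq_neq sh => h'0; rewrite Dh h'0 mul0r size_poly0.
have sh' : size h' = n.+1.
  by move: sh; rewrite Dh size_Mmonic ?monicXsubC // size_XsubC addn2 => [[]].
have dv' : Sp n h' %| \prod_(z <- rs) ('X - z%:P).
  by apply: dvdp_trans dv; rewrite Dh SpM ?sh' // dvdp_mulr.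
have [ys Dys Pys] := IH h' sh' dv'.
exists ((z + z^-1) :: ys).
  by rewrite big_cons Dh mulrC eqp_mull.
by move=> y; rewrite inE => /predU1P [-> | /Pys //]; exists z.
Qed.

End PolyS.

Arguments Sp {R}.

Lemma Sp_map (R R' : fieldType) (g : {rmorphism R -> R'}) n (h : {poly R}) :
  map_poly g (Sp n h) = Sp n (map_poly g h).
Proof.
rewrite /Sp rmorph_sum; apply: eq_bigr => i _.
rewrite /= map_polyZ !rmorphM !rmorphXn rmorphD rmorph1 !rmorphXn.
have mX : map_poly g (polyX R) = polyX R' by rewrite map_polyX.
by rewrite [_ (polyX R)]mX coef_map.
Qed.

Lemma Mpoly_Sp (F : fieldType) (f : {poly F}) :
  (0 < size f)%N -> Mpoly f = Sp (size f).-1 f.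
Proof. by move=> sf; rewrite /Mpoly /Sp prednK. Qed.

Lemma inv_pair (L : fieldType) (a c : L) : a != 0 -> c != 0 ->
  c + c^-1 = a + a^-1 -> (c == a) || (c == a^-1).
Proof.
move=> a0 c0 e.
have : (c - a) * (c - a^-1) = c * ((c + c^-1) - (a + a^-1)).
  rewrite !mulrBr !mulrBl !mulrDr !mulfV //; ring.
by rewrite e subrr mulr0 => /eqP; rewrite mulf_eq0 !subr_eq0.
Qed.


Section XHom.
Variables (K0 : fieldType) (A B : fieldExtType K0).

Section XRM.
Variables (E : {subfield A}) (f : 'Hom(A, B)).
Hypothesis homf : ahom_in E f.
Let kf : subvs_of E -> B := f \o vsval.
Fact kf_zmod : zmod_morphism kf.
Proof. by move=> a b; rewrite /kf /= !raddfB. Qed.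
Fact kf_monoid : monoid_morphism kf.
Proof.
have [fM f1] := ahom_inP homf.
by split=> [|a b]; rewrite /kf /= ?algid1 // fM ?subvsP.
Qed.
HB.instance Definition _ := @GRing.isZmodMorphism.Build _ _ kf kf_zmod.
HB.instance Definition _ := @GRing.isMonoidMorphism.Build _ _ kf kf_monoid.
Definition xrm := Eval hnf in (kf : {rmorphism _ -> _}).
Lemma xrmE a : xrm a = f (vsval a). Proof. by []. Qed.

Lemma xhom_horner p x :
  p \is a polyOver E -> x \in E -> f p.[x] = (map_poly f p).[f x].
Proof.
move=> /polyOver_subvs[{}p -> Ex].
rewrite (horner_map _ _ (Subvs Ex)) -[f _]/(xrm (p.[Subvs Ex])).
by rewrite -(horner_map xrm) map_poly_comp.
Qed.
End XRM.

Section XExt.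
Variables (E : {subfield A}) (f : 'Hom(A, B)) (x : A) (y : B).
Let xf z := (map_poly f (Fadjoin_poly E x z)).[y].
Fact xExt_zmod : zmod_morphism xf.
Proof. by move=> a b; rewrite /xf 2!raddfB hornerD hornerN. Qed.
Fact xExt_scalable : scalable xf.
Proof.
move=> k a; rewrite /xf linearZ /= -[RHS]mulr_algl -hornerZ; congr _.[_].
by apply/polyP => i; rewrite !(coefZ, coef_map) /= !mulr_algl linearZ.
Qed.
HB.instance Definition _ := @GRing.isZmodMorphism.Build _ _ xf xExt_zmod.
HB.instance Definition _ := @GRing.isScalable.Build _ _ _ _ xf xExt_scalable.
Let xfL := Eval hnf in (xf : {linear _ -> _}).
Definition xExt : 'Hom(A, B) := linfun xfL.

Lemma xExtE z : xExt z = (map_poly f (Fadjoin_poly E x z)).[y].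
Proof. by rewrite lfunE. Qed.

Hypothesis homf : ahom_in E f.
Hypothesis fPx_y_0 : root (map_poly f (minPoly E x)) y.

Lemma xExt_id z : z \in E -> xExt z = f z.
Proof. by move=> Ez; rewrite xExtE Fadjoin_polyC ?map_polyC ?hornerC. Qed.

Lemma xExt_poly p :
  p \in polyOver E -> xExt p.[x] = (map_poly f p).[y].
Proof.
move=> Ep; rewrite xExtE (Fadjoin_poly_mod x) //.
rewrite (divp_eq (map_poly f p) (map_poly f (minPoly E x))).
rewrite !hornerE (rootP fPx_y_0) mulr0 add0r.
have [p1 ->] := polyOver_subvs Ep.
have [Px1 ->] := polyOver_subvs (minPolyOver E x).
by rewrite -map_modp -!map_poly_comp (map_modp (@xrm E f homf)).
Qed.

Lemma xExtP : ahom_in <<E; x>> xExt.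
Proof.
have [fM f1] := ahom_inP homf.
apply/ahom_inP; split; last by rewrite xExt_id ?mem1v.
move=> _ _ /Fadjoin_polyP[p Ep ->] /Fadjoin_polyP[q Eq ->].
rewrite -hornerM !xExt_poly ?rpredM // -hornerM; congr _.[_].
apply/polyP=> i; rewrite coef_map !coefM /= linear_sum /=.
by apply: eq_bigr => j _; rewrite !coef_map /= fM ?(polyOverP _).
Qed.
End XExt.


Lemma xhom_root (p0 : {poly K0}) (ys : seq B) (E : {subfield A}) (f : 'Hom(A, B)) z :
  ahom_in E f -> map_poly (in_alg A) p0 != 0 -> root (map_poly (in_alg A) p0) z ->
  map_poly (in_alg B) p0 %= \prod_(y <- ys) ('X - y%:P) ->
  exists y, root (map_poly f (minPoly E z)) y.
Proof.
move=> homf nz rz spl.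
have [fM f1] := ahom_inP homf.
set pA := map_poly (in_alg A) p0.
have pAE : pA \is a polyOver E.
  apply/polyOverP=> i; rewrite coef_map /=.
  by apply: rpredZ; apply: rpred1.
pose xr := @xrm E f homf.
have [mp' Dmp] := polyOver_subvs (minPolyOver E z).
have [pA' DpA] := polyOver_subvs pAE.
have dv : mp' %| pA'.
  by rewrite -(dvdp_map vsval) -Dmp -DpA minPoly_dvdp.
have : map_poly xr mp' %| map_poly xr pA' by rewrite dvdp_map.
have -> : map_poly xr pA' = map_poly (in_alg B) p0.
  rewrite -[map_poly xr pA']/(map_poly (f \o vsval) pA').
  rewrite map_poly_comp -DpA /pA -map_poly_comp; apply: eq_map_poly => c /=.
  by rewrite linearZ /= f1.
rewrite (eqp_dvdr _ spl) => /dvdp_prod_XsubC[m Dm].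
have szm : (1 < size (map_poly xr mp'))%N.
  rewrite size_map_poly -(size_map_poly vsval) -Dmp.
  by apply: root_size_gt1 (root_minPoly _ _); rewrite monic_neq0 ?monic_minPoly.
move: (eqp_size Dm); rewrite size_prod_XsubC.
case Em: (mask m ys) Dm => [|y ms] Dm eSz; first by rewrite eSz in szm.
exists y.
have -> : map_poly f (minPoly E z) = map_poly xr mp'.
  by rewrite Dmp -map_poly_comp.
by rewrite (eqp_root Dm) root_prod_XsubC mem_head.
Qed.

Lemma xhom_extends (p0 : {poly K0}) (ys : seq B) (rs : seq A) :
  map_poly (in_alg A) p0 != 0 -> all (root (map_poly (in_alg A) p0)) rs ->
  map_poly (in_alg B) p0 %= \prod_(y <- ys) ('X - y%:P) ->
  forall (E : {subfield A}) (f : 'Hom(A, B)), ahom_in E f ->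
  exists g : 'Hom(A, B), ahom_in <<E & rs>>%VS g.
Proof.
move=> nz + spl; elim: rs => [|z rs IH] /= rts E f homf.
  by exists f; rewrite Fadjoin_nil.
case/andP: rts => rz rts.
have [y ry] := @xhom_root p0 ys E f z homf nz rz spl.
have homg := @xExtP E f z y homf ry.
have [g homg'] := IH rts <<E; z>>%AS _ homg.
by exists g; rewrite adjoin_cons.
Qed.

Definition f0fun (a : A) : B := coord [tuple (1 : A)] ord0 a *: (1 : B).
Fact f0_lin : linear f0fun.
Proof. by move=> k u v; rewrite /f0fun linearP /= scalerDl scalerA. Qed.
HB.instance Definition _ := GRing.isLinear.Build K0 A B *:%R f0fun f0_lin.
Definition f0 : 'Hom(A, B) := linfun f0fun.

Lemma f0_ahom : ahom_in 1 f0.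
Proof.
have c1 : coord [tuple (1 : A)] ord0 1 = 1.
  have := @coord_free K0 A 1 [tuple (1:A)] ord0 ord0.
  have fr : free [tuple (1:A)] by rewrite /= seq1_free oner_neq0.
  by move=> /(_ fr); rewrite eqxx.
apply/ahom_inP; split; last by rewrite lfunE /= /f0fun; have -> := c1; rewrite scale1r.
move=> _ _ /vlineP[a ->] /vlineP[b ->].
rewrite -scalerAl -scalerAr mul1r !lfunE /=; rewrite /f0fun !linearZ /=.
have -> := c1; rewrite !mulr1.
by rewrite -scalerAl mul1r scalerA.
Qed.

End XHom.

Theorem lemma5p4 (F : finFieldType) (f : {poly F})
  (hmonic : f \is monic)
  (gs : seq {poly F})
  (hgs_uniq : uniq gs)
  (hgs_monic : all (fun g => g \is monic) gs)
  (hgs_irr : forall g, g \in gs -> irreducible_poly g)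
  (hgs_ne : forall g, g \in gs -> (g != 'X - 1) && (g != 'X + 1))
  (hM : Mpoly f = ('X - 1) ^+ 2 * \prod_(g <- gs) g)
  (L1 : splittingFieldType (ratfun F)) (rs : seq L1)
  (hrs : map_poly (in_alg L1) (Mtpoly f) %= \prod_(z <- rs) ('X - z%:P))
  (hL1 : <<1%VS & rs>>%VS = fullv)
  (L2 : splittingFieldType (ratfun F))
  (hL2 : splittingFieldFor 1%VS (map_poly (in_alg L2) (fplust f)) fullv) :
  (('Gal({:L1} / 1%AS) / pair_kernel rs)%g \isog 'Gal({:L2} / 1%AS)%g)
  /\ (forall H0 : {group gal_of {:L1}},
        H0 \subset 'Gal({:L1} / 1%AS)%g ->
        H0 \isog ('Gal({:L1} / 1%AS) / pair_kernel rs)%g ->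
        (H0 :&: pair_kernel rs = 1)%g ->
        H0 \isog 'Gal({:L2} / 1%AS)%g).
Proof.
have fnz : f != 0 := monic_neq0 hmonic.
set m := (size f).-1.
have sf : size f = m.+1 by rewrite /m prednK // size_poly_gt0.
have fm1 : f`_m = 1 by have := hmonic; rewrite monicE lead_coefE -/m => /eqP.
have m1 : (0 < m)%N.
  rewrite lt0n; apply/negP => /eqP m0.
  have Pm : \prod_(g <- gs) g \is monic.
    by rewrite big_seq; apply: monic_prod => g /(allP hgs_monic).
  have : size (Mpoly f) = 1%N.
    have f01 : f`_0 = 1 by rewrite -fm1 m0.
    rewrite Mpoly_Sp ?sf // -/m /Sp m0 big_ord1 subnn expr0 mulr1 /= f01 scale1r.
    by rewrite size_poly1.
  rewrite hM size_mul; last first.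
  - exact: monic_neq0.
  - by rewrite expf_neq0 // -polyC1 polyXsubC_eq0.
  rewrite -polyC1 size_exp_XsubC.
  move: (monic_neq0 Pm); rewrite -size_poly_gt0; lia.
pose cR : {rmorphism F -> ratfun F} := @FracField.tofrac {poly F} \o @polyC F.
set p0 := fplust f.
have sp0 : size p0 = m.+1.
  rewrite /p0 /fplust -[map_poly (@cst F) f]/(map_poly cR f) size_addl size_map_poly sf //.
  by apply: leq_ltn_trans (size_polyC_leq1 _) _; rewrite ltnS.
have p0m : p0`_m = 1.
  rewrite /p0 /fplust -[map_poly (@cst F) f]/(map_poly cR f) coefD coef_map fm1 /= polyC1 rmorph1.
  by rewrite coefC (negbTE (lt0n_neq0 m1)) addr0.
have eMt : map_poly (in_alg L1) (Mtpoly f) = Sp m (map_poly (in_alg L1) p0).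
  rewrite /Mtpoly /p0 /fplust Mpoly_Sp ?sf // -/m.
  rewrite -[map_poly (@cst F) _]/(map_poly cR _) -[map_poly (@cst F) f]/(map_poly cR f).
  by rewrite !rmorphD /= !Sp_map map_polyZ map_polyXn map_polyC /= SpD SpC.
have sp1 : forall L : fieldExtType (ratfun F), size (map_poly (in_alg L) p0) = m.+1.
  by move=> L; rewrite size_map_poly sp0.
have [ys1 Dys1 Pys1] : exists2 ys1 : seq L1,
    map_poly (in_alg L1) p0 %= \prod_(y <- ys1) ('X - y%:P) &
    forall y, y \in ys1 -> exists2 z, z \in rs & y = z + z^-1.
  apply: (@split_Sp _ rs m); first exact: sp1.
  by rewrite -eMt (eqp_dvdl _ hrs) dvdpp.
have [ys2 Dys2 genL2] := hL2.
have nz2 : map_poly (in_alg L2) p0 != 0 by rewrite -size_poly_gt0 sp1.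
have rts2 : all (root (map_poly (in_alg L2) p0)) ys2.
  by apply/allP => y yin; rewrite (eqp_root Dys2) root_prod_XsubC.
have [g homg] := @xhom_extends _ L2 L1 p0 ys1 ys2 nz2 rts2 Dys1 _ _ (@f0_ahom _ L2 L1).
rewrite genL2 in homg.
pose phi : 'AHom(L2, L1) := AHom homg.
have phiE : forall c : ratfun F, phi (in_alg L2 c) = in_alg L1 c.
  by move=> c; rewrite linearZ /= (ahom_inP homg).2.
have mapphi : map_poly phi (map_poly (in_alg L2) p0) = map_poly (in_alg L1) p0.
  by rewrite -map_poly_comp; apply: eq_map_poly => c /=; rewrite phiE.
set Y := map phi ys2.
have DY : map_poly (in_alg L1) p0 %= \prod_(y <- Y) ('X - y%:P).
  have := Dys2; rewrite -(eqp_map phi) mapphi rmorph_prod /= big_map.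
  by under eq_bigr do rewrite (map_polyXsubC phi).
have rootY : forall u, root (map_poly (in_alg L1) p0) u = (u \in Y).
  by move=> u; rewrite (eqp_root DY) root_prod_XsubC.
have inY1 : forall u, (u \in Y) = (u \in ys1).
  by move=> u; rewrite -rootY (eqp_root Dys1) root_prod_XsubC.
have limgphi : limg phi = <<1 & Y>>%VS.
  by rewrite -genL2 aimg_adjoin_seq aimg1.
have p1o : map_poly (in_alg L1) p0 \is a polyOver 1%VS.
  by apply/polyOverP => i; rewrite coef_map /=; apply: rpredZ; apply: mem1v.
have sY : forall (s : gal_of {:L1}) u, u \in Y -> s u \in Y.
  move=> s u; rewrite -!rootY => ru.
  exact: (kHom_root_id (sub1v _) (k1AHom _ _) p1o (memvf u) ru).
have sE : forall (s : gal_of {:L1}) v, v \in limg phi -> s v \in limg phi.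
  move=> s v; rewrite limgphi => Hv.
  have : ((gal_repr s) @: <<1 & Y>> <= <<1 & Y>>)%VS.
    rewrite aimg_adjoin_seq aimg1; apply: adjoin_seqSr => _ /mapP[u uY ->].
    exact: sY.
  by move/subvP; apply; apply: memv_img.
have phiK : forall x, phi^-1%VF (phi x) = x := lker0_lfunK (AHom_lker0 phi).
have phiVK : forall v, v \in limg phi -> phi (phi^-1%VF v) = v := limg_lfunVK.
have g1 : phi 1 = 1 := (ahom_inP homg).2.
have s1 : forall s : gal_of {:L1}, s 1 = 1.
  by move=> s; exact: rmorph1.
have s1' : forall (s : gal_of {:L2}), s 1 = 1.
  by move=> s; exact: rmorph1.
have phiSE : forall (s : gal_of {:L1}) a, s (phi a) \in limg phi.
  by move=> s a; apply: sE; apply: memv_img; apply: memvf.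
have psi_ahom : forall s : gal_of {:L1},
    ahom_in fullv (phi^-1 \o gal_repr s \o phi)%VF.
  move=> s; apply/ahom_inP; split => [a b _ _|]; rewrite !comp_lfunE.
    have [a' Da] : exists a', s (phi a) = phi a'.
      by have [a' _ ->] := memv_imgP (phiSE s a); exists a'.
    have [b' Db] : exists b', s (phi b) = phi b'.
      by have [b' _ ->] := memv_imgP (phiSE s b); exists b'.
    have -> : s (phi (a * b)) = phi (a' * b').
      by rewrite !rmorphM /= Da Db.
    by rewrite Da Db !phiK.
  by rewrite g1 s1 -{1}g1 phiK.
pose rho (s : gal_of {:L1}) : gal_of {:L2} := gal {:L2} (AHom (psi_ahom s)).
have rhoE : forall s a, rho s a = phi^-1%VF (s (phi a)).
  by move=> s a; rewrite /rho galK ?subvf ?memvf //= !comp_lfunE.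
have rhoM : {in ('Gal({:L1} / 1%AS))%g &, {morph rho : x y / (x * y)%g}}.
  move=> x y _ _; apply/eqP/gal_eqP => a _.
  by rewrite [in RHS]galM ?memvf // !rhoE [in LHS]galM ?memvf // phiVK.
pose r := Morphism rhoM.
have allG1 : forall x : gal_of {:L1}, x \in ('Gal({:L1} / 1%AS))%g.
  by move=> x; rewrite gal_kHom ?sub1v // k1AHom.
have allG2 : forall x : gal_of {:L2}, x \in ('Gal({:L2} / 1%AS))%g.
  by move=> x; rewrite gal_kHom ?sub1v // k1AHom.
have p1m : (map_poly (in_alg L1) p0)`_m = 1 by rewrite coef_map /= p0m scale1r.
have rootrs : forall a, a \in rs -> a != 0 /\ root (map_poly (in_alg L1) p0) (a + a^-1).
  move=> a ars.
  have ra : root (Sp m (map_poly (in_alg L1) p0)) a.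
    by rewrite -eMt (eqp_root hrs) root_prod_XsubC.
  have a0 : a != 0.
    by apply: contraTneq ra => ->; rewrite /root Sp_horner0 p1m oner_neq0.
  split => //; move: ra; rewrite /root Sp_horner ?sp1 // mulf_eq0 expf_eq0.
  by rewrite (negbTE a0) andbF.
have kerE : ('ker r)%g = pair_kernel rs.
  apply/setP => x; rewrite /pair_kernel inE allG1 /=.
  apply/idP/idP.
  - move/(kerP r (allG1 x)) => rx1.
    have fixY : forall u, u \in Y -> x u = u.
      move=> u uY; have uE : u \in limg phi by rewrite limgphi seqv_sub_adjoin.
      have [a _ ->] := memv_imgP uE.
      have := rhoE x a; rewrite [rho x]rx1 gal_id => h.
      by have := congr1 phi h; rewrite phiVK ?phiSE // => <-.
    apply/allP => a ars; have [a0 rb] := rootrs a ars.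
    have xb := fixY _ (etrans (esym (rootY _)) rb).
    rewrite rmorphD fmorphV in xb.
    have xa0 : x a != 0 by rewrite fmorph_eq0.
    exact: inv_pair a0 xa0 xb.
  - move/allP => Hx; apply/(kerP r (allG1 x)); apply/eqP/gal_eqP => a _.
    rewrite gal_id /= rhoE.
    suff -> : x (phi a) = phi a by rewrite phiK.
    have : (<<1 & Y>> <= fixedField [set x])%VS.
      apply/Fadjoin_seqP; split; first exact: sub1v.
      move=> u uY; apply/fixedFieldP; first exact: memvf.
      move=> x' /set1P ->.
      have uy1 : u \in ys1 by rewrite -inY1.
      have [z zrs ->] := Pys1 u uy1.
      rewrite rmorphD fmorphV /=.
      by case/orP: (Hx z zrs) => /eqP ->; rewrite ?invrK // addrC.
    move/subvP/(_ (phi a)); rewrite -limgphi memv_img ?memvf // => /(_ isT).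
    by case/mem_fixedFieldP => _ ->; rewrite ?set11.
have p1M : map_poly (in_alg L1) (Mtpoly f) \is a polyOver 1%VS.
  by apply/polyOverP => i; rewrite coef_map /=; apply: rpredZ; apply: mem1v.
have imE : (r @* 'Gal({:L1} / 1%AS))%g = ('Gal({:L2} / 1%AS))%g.
  apply/eqP; rewrite eqEsubset; apply/andP; split; apply/subsetP => tau _.
    exact: allG2.
  pose imL := [aspace of limg phi].
  pose s0 := (phi \o gal_repr tau \o phi^-1)%VF.
  have hs0 : kHom 1 imL s0.
    apply/kHomP_tmp; split.
      move=> c /vlineP[k ->]; rewrite !comp_lfunE.
      have -> : phi^-1%VF (k *: 1) = k *: 1.
        by rewrite -{1}g1 -linearZ phiK.
      by rewrite linearZ /= s1' linearZ /= g1.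
    move=> u v /memv_imgP[a _ ->] /memv_imgP[b _ ->].
    rewrite !comp_lfunE.
    by rewrite -(rmorphM phi) !(lker0_lfunK (AHom_lker0 phi)) !rmorphM.
  have spl : splittingFieldFor imL (map_poly (in_alg L1) (Mtpoly f)) fullv.
    exists rs => //; apply/eqP; rewrite eqEsubv subvf /= -{1}hL1.
    by apply: adjoin_seqSl; rewrite -(aimg1 phi) limgS ?subvf.
  have [g1' homg1 Dg1] := kHom_extends (sub1v _) hs0 p1M spl.
  have autg1 : kAut 1 {:L1}%AS g1' by rewrite kAutfE.
  have [x _ Dx] := kAut_to_gal autg1.
  have -> : tau = r x.
    apply/eqP/gal_eqP => a _; rewrite /= rhoE -Dx ?memvf // -Dg1; last first.
      by rewrite memv_img ?memvf.
    by rewrite /s0 !comp_lfunE !(lker0_lfunK (AHom_lker0 phi)).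
  by apply/morphimP; exists x => //; apply: allG1.
have iso : ('Gal({:L1} / 1%AS) / pair_kernel rs)%g \isog 'Gal({:L2} / 1%AS)%g.
  by rewrite -kerE -imE; exact: first_isog.
split => // H0 _ h0 _; exact: isog_trans h0 iso.
Qed.
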